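(* Let $G$ be a graph with $L(G)=2l(G)$. Then there do not exist two distinct vertices $u,v$ of degree one in $G$ that are adjacent to the same vertex $w$.
   Context: Graphs are finite, undirected, without loops or multiple edges. $\nu(G)$ denotes the maximum size of a matching of $G$; a matching is maximum if it has $\nu(G)$ edges. For $F\subseteq E(G)$, $G\setminus F$ is the graph with vertex set $V(G)$ and edge set $E(G)\setminus F$. Define $L(G)=\max\{\nu(G\setminus F): F \text{ a maximum matching of } G\}$ and $l(G)=\min\{\nu(G\setminus F): F \text{ a maximum matching of } G\}$. *)

(* Defs.v *)
(* Simple graphs: symmetric irreflexive relation on a finType. *)
From mathcomp Require Import all_boot.
Set Implicit Arguments. Unset Strict Implicit. Unset Printing Implicit Defensive.

Section Matchings.
Variable T : finType.

Definition edges (e : rel T) : {set {set T}} :=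
  [set [set x; y] | x in T, y in T & e x y].

Definition is_matching (F M : {set {set T}}) : bool :=
  (M \subset F) &&
  [forall f1 in M, forall f2 in M, (f1 != f2) ==> [disjoint f1 & f2]].

Definition nu (F : {set {set T}}) : nat :=
  \max_(M : {set {set T}} | is_matching F M) #|M|.

Definition is_max_matching (F M : {set {set T}}) : bool :=
  is_matching F M && (#|M| == nu F).

Definition Lg (e : rel T) : nat :=
  \max_(M : {set {set T}} | is_max_matching (edges e) M) nu (edges e :\: M).

(* l(G) = min { nu(G \ F) : F maximum matching of G }.  The neutral element
   nu(G) is harmless: a maximum matching always exists and nu(G \ F) <= nu(G). *)
Definition lg (e : rel T) : nat :=
  \big[minn/nu (edges e)]_(M : {set {set T}} | is_max_matching (edges e) M)
     nu (edges e :\: M).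

Definition degree (e : rel T) (x : T) : nat := #|[set y | e x y]|.

End Matchings.

(* Main.v *)
Require Import Defs.
From mathcomp Require Import all_boot.

Set Implicit Arguments. Unset Strict Implicit. Unset Printing Implicit Defensive.

Section S.
Variable T : finType.
Variable e : rel T.
Hypothesis e_sym : symmetric e.
Local Notation E := (edges e).

Lemma edgesP f : f \in E -> exists x y, e x y /\ f = [set x; y].
Proof.
case/imset2P => x y _; rewrite inE => /andP[_ exy] ->; by exists x, y.
Qed.

Lemma mem_edges x y : e x y -> [set x; y] \in E.
Proof.
move=> exy; apply/imset2P; apply: (Imset2spec (x1:=x) (x2:=y)) => //.
by rewrite inE exy.
Qed.

Lemma nu_ge (B N : {set {set T}}) : is_matching B N -> #|N| <= nu B.
Proof. by move=> h; rewrite /nu; apply: (leq_bigmax_cond (P:=is_matching B) (F:=fun M : {set {set T}} => #|M|)). Qed.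

Lemma set0_matching (B : {set {set T}}) : is_matching B set0.
Proof.
by rewrite /is_matching sub0set; apply/forallP => f; rewrite inE.
Qed.

Lemma nu_attained (B : {set {set T}}) : exists N, is_matching B N /\ #|N| = nu B.
Proof.
have h : 0 < #|[pred M | is_matching B M]|.
  by apply/card_gt0P; exists set0; rewrite inE set0_matching.
case: (eq_bigmax_cond (fun M : {set {set T}} => #|M|) h) => N; rewrite inE => hN eqN.
by exists N; split=> //; rewrite /nu -eqN.
Qed.

Lemma match_disj (B N : {set {set T}}) f1 f2 : is_matching B N -> f1 \in N -> f2 \in N ->
  f1 != f2 -> [disjoint f1 & f2].
Proof.
case/andP=> _ /forallP h h1 h2 ne.
by move: (h f1); rewrite h1 /= => /forallP/(_ f2); rewrite h2 ne.
Qed.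

Lemma match_w (B N : {set {set T}}) f1 f2 w : is_matching B N -> f1 \in N -> f2 \in N ->
  w \in f1 -> w \in f2 -> f1 = f2.
Proof.
move=> hN h1 h2 w1 w2; apply/eqP; apply/negPn/negP => ne.
by move: (disjointFl (match_disj hN h1 h2 ne) w2); rewrite w1.
Qed.

Lemma match_sub (B B' N N' : {set {set T}}) : is_matching B N -> N' \subset N -> N' \subset B' ->
  is_matching B' N'.
Proof.
move=> hN sN sB; rewrite /is_matching sB /=.
apply/forallP => f1; apply/implyP => h1; apply/forallP => f2; apply/implyP => h2.
apply/implyP => ne; apply: (match_disj hN) => //; exact: (subsetP sN).
Qed.

Definition pendant p w := (degree e p == 1) && e p w.

Lemma pendant_edge p w (f : {set T}) : pendant p w -> f \in E -> p \in f -> f = [set p; w].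
Proof.
case/andP=> /cards1P[a ha] epw /edgesP[x [y [exy ->]]].
have key : forall z, e p z -> z = w.
  move=> z epz.
  have : z \in [set y | e p y] by rewrite inE.
  have : w \in [set y | e p y] by rewrite inE.
  by rewrite ha !inE => /eqP -> /eqP ->.
rewrite !inE => /orP[/eqP ex | /eqP ey]; subst.
  by rewrite (key y exy).
by rewrite (key x); [rewrite setUC | rewrite e_sym].
Qed.

Lemma extend (B N : {set {set T}}) p w : is_matching B N -> B \subset E -> [set p; w] \in B ->
  pendant p w -> (forall f, f \in N -> w \notin f) -> #|N|.+1 <= nu B.
Proof.
move=> hN sBE pwB pp wN.
have pwN : [set p; w] \notin N.
  by apply/negP => /wN; rewrite !inE eqxx orbT.
have <- : #|[set p; w] |: N| = #|N|.+1 by rewrite cardsU1 pwN.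
apply: nu_ge; rewrite /is_matching; apply/andP; split.
  by rewrite subUset sub1set pwB; case/andP: hN.
have dj : forall f, f \in N -> [disjoint [set p; w] & f].
  move=> f fN; rewrite disjoint_subset; apply/subsetP => z.
  rewrite !inE => /orP[/eqP-> | /eqP->]; apply/negP => hz.
  - have fE : f \in E by apply: (subsetP sBE); apply: (subsetP (proj1 (andP hN))).
    have := pendant_edge pp fE hz => eqf.
    by move: (wN f fN); rewrite eqf !inE eqxx orbT.
  - by move: (wN f fN); rewrite hz.
apply/forallP => f1; apply/implyP; rewrite !inE => h1.
apply/forallP => f2; apply/implyP; rewrite !inE => h2.
case/orP: h1 => [/eqP-> | h1]; case/orP: h2 => [/eqP-> | h2].
- by rewrite eqxx.
- by apply/implyP => _; exact: dj.
- by apply/implyP => _; rewrite disjoint_sym; apply: dj.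
- by apply/implyP => ne; exact: (match_disj hN).
Qed.


Lemma core (F F' M : {set {set T}}) f0 p w :
  is_matching E F -> is_matching E F' -> #|F| = #|F'| ->
  is_matching (E :\: F') M -> f0 \in F -> w \in f0 -> pendant p w ->
  [set p; w] \in E -> [set p; w] != f0 -> #|M|.+1 <= 2 * nu (E :\: F).
Proof.
move=> hF hF' cFF' hM f0F wf0 pp pwE pwf0.
have sFE : F \subset E by case/andP: hF.
have sF'E : F' \subset E by case/andP: hF'.
have sME : M \subset E :\: F' by case/andP: hM.
have pwF : [set p; w] \notin F.
  apply/negP => pwF; move/negP: pwf0; apply; apply/eqP.
  by apply: (match_w hF pwF f0F _ wf0); rewrite !inE eqxx orbT.
have pwEF : [set p; w] \in E :\: F by rewrite inE pwF pwE.
have EFE : E :\: F \subset E by apply: subsetDl.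
have cardeq : #|F :\: F'| = #|F' :\: F|.
  apply: (@addnI #|F :&: F'|).
  by rewrite cardsID setIC cardsID.
have bndD : #|F' :\: F| <= nu (E :\: F).
  by apply: nu_ge; apply: (match_sub hF' (subsetDl _ _)); apply: setSD.
have sMFE : M :\: F \subset E :\: F.
  by apply: setSD; apply: (subset_trans sME); apply: subsetDl.
have bndN : #|M :\: F| <= nu (E :\: F).
  by apply: nu_ge; apply: (match_sub hM (subsetDl _ _)).
have MF : M :&: F \subset F :\: F'.
  apply/subsetP => z; rewrite !inE => /andP[zM ->]; rewrite andbT.
  by move: (subsetP sME z zM); rewrite inE => /andP[].
have Mcard : #|M| = #|M :&: F| + #|M :\: F| by rewrite cardsID.
have bndMF := subset_leq_card MF.
rewrite Mcard mul2n -addnn.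
case: (boolP (f0 \in F')) => f0F'.
  have h : #|F' :\: F|.+1 <= nu (E :\: F).
    apply: (extend (p:=p) (w:=w)) => //.
      by apply: (match_sub hF' (subsetDl _ _)); apply: setSD.
    move=> f; rewrite inE => /andP[fF fF']; apply/negP => wf.
    by have eqf := match_w hF' fF' f0F' wf wf0; move: fF; rewrite eqf f0F.
  rewrite -addSn; apply: leq_add => //.
  by apply: leq_trans h; rewrite ltnS -cardeq.
case: (boolP (f0 \in M)) => f0M.
  have h : #|M :\: F|.+1 <= nu (E :\: F).
    apply: (extend (p:=p) (w:=w)) => //.
      by apply: (match_sub hM (subsetDl _ _)).
    move=> f; rewrite inE => /andP[fF fM]; apply/negP => wf.
    by have eqf := match_w hM fM f0M wf wf0; move: fF; rewrite eqf f0F.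
  rewrite -addnS; apply: leq_add => //.
  by apply: leq_trans bndD; rewrite -cardeq.
have MF2 : M :&: F \subset (F :\: F') :\ f0.
  apply/subsetP => z zMF; have := subsetP MF z zMF.
  rewrite !inE => ->; rewrite andbT.
  apply/negP => /eqP ez; move: zMF; rewrite ez inE (negbTE f0M).
  by [].
have c2 : #|F :\: F'| = 1 + #|(F :\: F') :\ f0|.
  by rewrite (cardsD1 f0 (F :\: F')) inE f0F f0F'.
rewrite -addSn; apply: leq_add => //.
apply: leq_trans bndD; rewrite -cardeq c2 add1n ltnS.
exact: subset_leq_card MF2.
Qed.

Lemma lg_attained : exists F, is_max_matching E F /\ nu (E :\: F) <= lg e.
Proof.
rewrite /lg.
apply: (big_ind (fun x => exists F, is_max_matching E F /\ nu (E :\: F) <= x)).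
- have [F0 [hF0 cF0]] := nu_attained E.
  exists F0; split; first by rewrite /is_max_matching hF0 cF0 eqxx.
  have [N [hN cN]] := nu_attained (E :\: F0).
  rewrite -cN; apply: nu_ge; apply: (match_sub hN (subxx _)).
  case/andP: hN => sN _; exact: (subset_trans sN (subsetDl E F0)).
- move=> x y [F1 [h1 h1']] [F2 [h2 h2']]; rewrite /minn; case: ifP => _.
    by exists F1.
  by exists F2.
- by move=> F hF; exists F.
Qed.

End S.


Theorem corollary1 (T : finType) (e : rel T)
  (e_sym : symmetric e) (e_irr : irreflexive e) :
  Lg e = 2 * lg e ->
  ~ exists u v w : T,
      [/\ u != v, degree e u = 1, degree e v = 1, e u w & e v w].
Proof.
move=> hL [u [v [w [uv du dv euw evw]]]].
have pu : pendant e u w by rewrite /pendant du eqxx euw.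
have pv : pendant e v w by rewrite /pendant dv eqxx evw.
have [F [hFmax hFl]] := lg_attained e.
case/andP: hFmax => hF /eqP cF.
have [f0 f0F wf0] : exists2 f0, f0 \in F & w \in f0.
  case: (boolP [exists f0 in F, w \in f0]).
    by case/existsP => f0 /andP[h1 h2]; exists f0.
  move=> hn; exfalso.
  have : #|F|.+1 <= nu (edges e).
    apply: (extend e_sym (p:=u) (w:=w)) => //.
    - exact: mem_edges.
    - move=> f fF; apply/negP => wf; move/negP: hn; apply.
      by apply/existsP; exists f; rewrite fF wf.
  by rewrite cF ltnn.
have [p [pp pwE pwf0]] : exists p, [/\ pendant e p w, [set p; w] \in edges e & [set p; w] != f0].
  case: (boolP ([set u; w] == f0)) => h; last by exists u; split => //; apply: mem_edges.
  exists v; split => //; first exact: mem_edges.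
  rewrite -(eqP h); apply/negP => /eqP eq.
  have : u \in [set v; w] by rewrite eq !inE eqxx.
  rewrite !inE => /orP[/eqP euv | /eqP euw'].
    by rewrite euv eqxx in uv.
  by rewrite euw' e_irr in euw.
have key : forall F', is_max_matching (edges e) F' ->
    nu (edges e :\: F') < 2 * nu (edges e :\: F).
  move=> F' /andP[hF' /eqP cF'].
  have [M [hM cM]] := nu_attained (edges e :\: F').
  rewrite -cM; apply: (core e_sym hF hF' _ hM f0F wf0 pp pwE pwf0).
  by rewrite cF cF'.
have hFF : is_max_matching (edges e) F by rewrite /is_max_matching hF cF eqxx.
have le2 : 2 * nu (edges e :\: F) <= 2 * lg e by rewrite leq_mul2l hFl orbT.
have pos : 0 < 2 * lg e.
  exact: leq_trans (leq_ltn_trans (leq0n _) (key F hFF)) le2.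
have : Lg e <= (2 * lg e).-1.
  apply/bigmax_leqP => F' hF'.
  rewrite -ltnS prednK //; exact: leq_trans (key F' hF') le2.
rewrite hL => h.
have h2 : (2 * lg e).-1 < 2 * lg e by rewrite ltn_predL.
by have := leq_ltn_trans h h2; rewrite ltnn.
Qed.
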